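(* Assume the vector variational inequality defined by $F$ and $K$ is monotone. (i) If $\mathcal{A}$ and $\mathcal{B}$ are two different connected components of $\mathrm{Sol}^w(F,K)$, then $S^{-1}(\mathcal{A})\cap S^{-1}(\mathcal{B})=\emptyset$. (ii) If $\mathcal{A}$ and $\mathcal{B}$ are two different connected components of $\mathrm{Sol}^{pr}(F,K)$, then $\{\xi\in\operatorname{ri}\Delta: S(\xi)\cap\mathcal{A}\neq\emptyset\}\cap\{\xi\in\operatorname{ri}\Delta: S(\xi)\cap\mathcal{B}\neq\emptyset\}=\emptyset$.
   Context: Let $K\subset\mathbb{R}^n$ be a nonempty closed convex set and $F_1,\dots,F_m:K\to\mathbb{R}^n$ continuous functions; write $F=(F_1,\dots,F_m)$ and $F(x)(u)=(\langle F_1(x),u\rangle,\dots,\langle F_m(x),u\rangle)$. The problem is monotone if each $F_l$ is monotone on $K$: $\langle F_l(y)-F_l(x),y-x\rangle\ge0$ for all $x,y\in K$. Let $\Delta=\{\xi\in\mathbb{R}^m_+ : \sum_l\xi_l=1\}$, $\operatorname{ri}\Delta=\{\xi\in\Delta:\xi_l>0,\ l=1,\dots,m\}$, and $F_\xi=\sum_l\xi_lF_l$. For $G:K\to\mathbb{R}^n$, $\mathrm{Sol}(G,K)=\{x\in K:\langle G(x),y-x\rangle\ge0\ \forall y\in K\}$. The weak Pareto solution set $\mathrm{Sol}^w(F,K)$ is the set of $x\in K$ with $F(x)(x-y)\notin\operatorname{int}\mathbb{R}^m_+$ for all $y\in K$; it is known that $\mathrm{Sol}^w(F,K)=\bigcup_{\xi\in\Delta}\mathrm{Sol}(F_\xi,K)$.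 The proper Pareto solution set is $\mathrm{Sol}^{pr}(F,K)=\bigcup_{\xi\in\operatorname{ri}\Delta}\mathrm{Sol}(F_\xi,K)$. The basic multifunction is $S(\xi)=\mathrm{Sol}(F_\xi,K)$ for $\xi\in\Delta$, and $S^{-1}(\mathcal{A})=\{\xi\in\Delta:S(\xi)\cap\mathcal{A}\ne\emptyset\}$. *)

(* Defs.v *)
From mathcomp Require Import all_boot.
From Stdlib Require Import Reals.
Set Implicit Arguments. Unset Strict Implicit.
Open Scope R_scope.

Definition vec (n : nat) := 'I_n -> R.

Definition vsub n (x y : vec n) : vec n := fun i => x i - y i.
Definition vadd n (x y : vec n) : vec n := fun i => x i + y i.
Definition vscale n (t : R) (x : vec n) : vec n := fun i => t * x i.

Definition inner n (x y : vec n) : R := \big[Rplus/0]_(i < n) (x i * y i).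
Definition vdist n (x y : vec n) : R := sqrt (inner (vsub x y) (vsub x y)).

Definition vclosed n (K : vec n -> Prop) : Prop :=
  forall x, (forall eps, 0 < eps -> exists y, K y /\ vdist x y < eps) -> K x.
Definition vconvex n (K : vec n -> Prop) : Prop :=
  forall x y t, K x -> K y -> 0 <= t <= 1 ->
    K (vadd (vscale t x) (vscale (1 - t) y)).

Definition vcontinuous_on n (K : vec n -> Prop) (G : vec n -> vec n) : Prop :=
  forall x, K x -> forall eps, 0 < eps -> exists delta, 0 < delta /\
    forall y, K y -> vdist x y < delta -> vdist (G x) (G y) < eps.

Definition vmonotone_on n (K : vec n -> Prop) (G : vec n -> vec n) : Prop :=
  forall x y, K x -> K y -> 0 <= inner (vsub (G y) (G x)) (vsub y x).

Definition vopen_in n (A U : vec n -> Prop) : Prop :=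
  forall x, A x -> U x -> exists eps, 0 < eps /\
    forall y, A y -> vdist x y < eps -> U y.

Definition vconnected n (A : vec n -> Prop) : Prop :=
  forall U V, vopen_in A U -> vopen_in A V ->
    (forall x, A x -> U x \/ V x) ->
    (exists x, A x /\ U x) -> (exists x, A x /\ V x) ->
    exists x, A x /\ U x /\ V x.

Definition vconn_component n (X C : vec n -> Prop) : Prop :=
  (forall x, C x -> X x) /\ (exists x, C x) /\ vconnected C /\
  forall D, (forall x, D x -> X x) -> vconnected D -> (forall x, C x -> D x) ->
    forall x, D x -> C x.

Definition same_set n (A B : vec n -> Prop) : Prop := forall x, A x <-> B x.

Definition simplex m (xi : 'I_m -> R) : Prop :=
  (forall l, 0 <= xi l) /\ \big[Rplus/0]_(l < m) xi l = 1.
Definition ri_simplex m (xi : 'I_m -> R) : Prop :=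
  simplex xi /\ forall l, 0 < xi l.

Definition Fxi n m (F : 'I_m -> vec n -> vec n) (xi : 'I_m -> R) : vec n -> vec n :=
  fun x i => \big[Rplus/0]_(l < m) (xi l * F l x i).

Definition Sol n (G : vec n -> vec n) (K : vec n -> Prop) (x : vec n) : Prop :=
  K x /\ forall y, K y -> 0 <= inner (G x) (vsub y x).

Definition Sol_w n m (F : 'I_m -> vec n -> vec n) (K : vec n -> Prop) (x : vec n) : Prop :=
  K x /\ forall y, K y -> ~ (forall l, 0 < inner (F l x) (vsub x y)).

Definition Sol_pr n m (F : 'I_m -> vec n -> vec n) (K : vec n -> Prop) (x : vec n) : Prop :=
  exists xi, ri_simplex xi /\ Sol (Fxi F xi) K x.

Definition S_map n m (F : 'I_m -> vec n -> vec n) (K : vec n -> Prop) (xi : 'I_m -> R) :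
  vec n -> Prop := Sol (Fxi F xi) K.
Definition S_inv n m (F : 'I_m -> vec n -> vec n) (K : vec n -> Prop) (A : vec n -> Prop)
  (xi : 'I_m -> R) : Prop :=
  simplex xi /\ exists x, S_map F K xi x /\ A x.

(* Main.v *)
From HB Require Import structures.
Require Import Defs.
From mathcomp Require Import all_boot.
From Stdlib Require Import Reals Lra.
Open Scope R_scope.
Set Implicit Arguments. Unset Strict Implicit.
Lemma Rpa : associative Rplus. Proof. move=> *; lra. Qed.
Lemma Rma : associative Rmult. Proof. move=> *; ring. Qed.
Lemma Rmult0l' : left_zero 0 Rmult. Proof. move=> x; lra. Qed.
Lemma Rmult0r' : right_zero 0 Rmult. Proof. move=> x; lra. Qed.
HB.instance Definition _ := Monoid.isComLaw.Build R 0 Rplus Rpa Rplus_comm Rplus_0_l.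
HB.instance Definition _ := Monoid.isComLaw.Build R 1 Rmult Rma Rmult_comm Rmult_1_l.
HB.instance Definition _ := Monoid.isMulLaw.Build R 0 Rmult Rmult0l' Rmult0r'.
HB.instance Definition _ := Monoid.isAddLaw.Build R Rmult Rplus Rmult_plus_distr_r Rmult_plus_distr_l.
Notation sumR := (fun n (f : 'I_n -> R) => \big[Rplus/0]_(i < n) f i).

Lemma sumD n (f g : 'I_n -> R) :
  \big[Rplus/0]_(i<n) (f i + g i) = \big[Rplus/0]_(i<n) f i + \big[Rplus/0]_(i<n) g i.
Proof. by rewrite big_split. Qed.

Lemma sumN n (f : 'I_n -> R) :
  \big[Rplus/0]_(i<n) (- f i) = - \big[Rplus/0]_(i<n) f i.
Proof.
rewrite (big_morph Ropp (id1 := 0) (op1 := Rplus)) //.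
- move=> x y; lra.
- lra.
Qed.

Lemma sumZ n c (f : 'I_n -> R) :
  \big[Rplus/0]_(i<n) (c * f i) = c * \big[Rplus/0]_(i<n) f i.
Proof. by rewrite big_distrr. Qed.

Lemma sum_ge0 n (f : 'I_n -> R) : (forall i, 0 <= f i) -> 0 <= \big[Rplus/0]_(i<n) f i.
Proof. move=> H; apply: (big_ind (fun x => 0 <= x)) => //; [lra | move=> x y; lra]. Qed.

Lemma sum_le n (f g : 'I_n -> R) : (forall i, f i <= g i) ->
  \big[Rplus/0]_(i<n) f i <= \big[Rplus/0]_(i<n) g i.
Proof. move=> H; apply: (big_ind2 (fun x y => x <= y)) => //; [lra | move=> *; lra]. Qed.

Lemma term_le_sum n (f : 'I_n -> R) j : (forall i, 0 <= f i) -> f j <= \big[Rplus/0]_(i<n) f i.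
Proof.
move=> H; rewrite (bigD1 j) //=.
rewrite -{1}(Rplus_0_r (f j)); apply: Rplus_le_compat_l.
apply: (big_ind (fun x => 0 <= x)) => //; [lra | move=> x y; lra].
Qed.

Lemma sum_abs n (f : 'I_n -> R) : Rabs (\big[Rplus/0]_(i<n) f i) <= \big[Rplus/0]_(i<n) Rabs (f i).
Proof.
apply: (big_ind2 (fun x y => Rabs x <= y)).
- rewrite Rabs_R0; lra.
- move=> x1 x2 y1 y2 h1 h2. have := Rabs_triang x1 y1. lra.
- move=> i _; lra.
Qed.

Lemma inner_comb2 n (u w d1 d2 : vec n) a b :
  (forall i, w i = a * d1 i + b * d2 i) -> inner u w = a * inner u d1 + b * inner u d2.
Proof.
move=> H; rewrite /inner -!sumZ -sumD; apply: eq_bigr => i _; rewrite H; ring.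
Qed.

Lemma inner_comb1 n (u v1 v2 d : vec n) a b :
  (forall i, u i = a * v1 i + b * v2 i) -> inner u d = a * inner v1 d + b * inner v2 d.
Proof.
move=> H; rewrite /inner -!sumZ -sumD; apply: eq_bigr => i _; rewrite H; ring.
Qed.

Lemma inner_ge0 n (u : vec n) : 0 <= inner u u.
Proof. apply: sum_ge0 => i; nra. Qed.

Lemma inner_fxi n m (xi : 'I_m -> R) (g : 'I_m -> vec n) (d : vec n) :
  inner (fun i => \big[Rplus/0]_(l<m) (xi l * g l i)) d =
  \big[Rplus/0]_(l<m) (xi l * inner (g l) d).
Proof.
rewrite /inner. under eq_bigr do rewrite big_distrl.
rewrite exchange_big; apply: eq_bigr => l _; rewrite -sumZ.
apply: eq_bigr => i _ /=; ring.
Qed.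

Lemma vdist_scaled n (x y d : vec n) c :
  (forall i, vsub x y i = c * d i) -> vdist x y = Rabs c * sqrt (inner d d).
Proof.
move=> H; rewrite /vdist.
have -> : inner (vsub x y) (vsub x y) = (c * c) * inner d d.
  rewrite /inner -sumZ; apply: eq_bigr => i _; rewrite H; ring.
rewrite sqrt_mult; [| nra | apply: inner_ge0].
by rewrite -sqrt_Rsqr_abs.
Qed.

Lemma vdist_sym n (x y : vec n) : vdist x y = vdist y x.
Proof.
rewrite /vdist /inner; f_equal; apply: eq_bigr => i _; rewrite /vsub; ring.
Qed.

Lemma coord_le n (u : vec n) i : Rabs (u i) <= sqrt (inner u u).
Proof.
rewrite -sqrt_Rsqr_abs; apply: sqrt_le_1_alt.
rewrite /Rsqr; apply: (@term_le_sum n (fun i => u i * u i) i) => j; nra.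
Qed.

Lemma inner_bound n (u d : vec n) :
  Rabs (inner u d) <= sqrt (inner u u) * \big[Rplus/0]_(i<n) Rabs (d i).
Proof.
apply: Rle_trans; first by apply: sum_abs.
rewrite -sumZ; apply: sum_le => i; rewrite Rabs_mult.
have := coord_le u i; have := Rabs_pos (d i); nra.
Qed.
From Stdlib Require Import Classical FunctionalExtensionality.

Lemma interval_conn (P Q : R -> Prop) :
  (forall t, 0 <= t <= 1 -> P t \/ Q t) ->
  (forall t, 0 <= t <= 1 -> P t -> exists d, 0 < d /\ forall s, 0 <= s <= 1 -> Rabs (s - t) < d -> P s) ->
  (forall t, 0 <= t <= 1 -> Q t -> exists d, 0 < d /\ forall s, 0 <= s <= 1 -> Rabs (s - t) < d -> Q s) ->
  P 0 -> Q 1 -> exists t, 0 <= t <= 1 /\ P t /\ Q t.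
Proof.
move=> Hcov HP HQ P0 Q1.
apply: NNPP => Hno.
have Hnb : forall t, 0 <= t <= 1 -> P t -> Q t -> False.
  by move=> t ht pt qt; apply: Hno; exists t.
pose E := fun t => 0 <= t <= 1 /\ forall s, 0 <= s <= t -> P s.
have Eb : bound E by exists 1 => t [ht _]; lra.
have Ene : exists t, E t.
  exists 0; split; first lra. move=> s hs. by have -> : s = 0 by lra.
have [c [cub club]] := completeness E Eb Ene.
have c0 : 0 <= c by apply: cub; split; [lra | move=> s hs; have -> : s = 0 by lra].
have c1 : c <= 1 by apply: club => t [ht _]; lra.
have Pbelow : forall s, 0 <= s < c -> P s.
  move=> s hs. apply: NNPP => nps.
  have : c <= s. apply: club => t [ht Ht]. apply: Rnot_lt_le => hts.
    apply: nps; apply: Ht; lra.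
  lra.
case: (Hcov c (conj c0 c1)) => [Pc | Qc].
- have [d [d0 Hd]] := HP c (conj c0 c1) Pc.
  case: (Req_dec c 1) => [c1e | c1n].
  + by apply: (Hnb c (conj c0 c1)) => //; rewrite c1e.
  pose t := Rmin 1 (c + d / 2).
  have ht : c < t. rewrite /t; apply: Rmin_glb_lt; lra.
  have t1 : t <= 1 by apply: Rmin_l.
  have t2 : t <= c + d / 2 by apply: Rmin_r.
  have : t <= c.
    apply: cub; split; first lra.
    move=> s hs. case: (Rlt_le_dec s c) => hsc; first by apply: Pbelow; lra.
    apply: Hd; first lra.
    rewrite Rabs_right; lra.
  lra.
- have cn0 : c <> 0. move=> ce; apply: (Hnb 0); [lra | done | by rewrite -ce].
  have [d [d0 Hd]] := HQ c (conj c0 c1) Qc.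
  pose s := Rmax 0 (c - d / 2).
  have hs0 : 0 <= s := Rmax_l _ _.
  have hsc : s < c. rewrite /s; apply: Rmax_lub_lt; lra.
  apply: (Hnb s); first lra.
  + apply: Pbelow; lra.
  + apply: Hd; first lra. rewrite Rabs_left; last lra.
    have := Rmax_r 0 (c - d/2); rewrite -/s; lra.
Qed.
Definition seg n (a b : vec n) (t : R) : vec n := vadd (vscale t b) (vscale (1 - t) a).

Lemma seg_dist n (a b : vec n) t s :
  vdist (seg a b t) (seg a b s) = Rabs (t - s) * sqrt (inner (vsub b a) (vsub b a)).
Proof. apply: vdist_scaled => i; rewrite /vsub /seg /vadd /vscale; ring. Qed.

Lemma open_seg n (C U : vec n -> Prop) (a b : vec n) :
  vopen_in C U -> (forall t, 0 <= t <= 1 -> C (seg a b t)) ->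
  forall t, 0 <= t <= 1 -> U (seg a b t) ->
  exists d, 0 < d /\ forall s, 0 <= s <= 1 -> Rabs (s - t) < d -> U (seg a b s).
Proof.
move=> HU HC t ht Ut.
have [e [e0 He]] := HU _ (HC t ht) Ut.
set D := sqrt (inner (vsub b a) (vsub b a)).
have D0 : 0 <= D by apply: sqrt_pos.
exists (e / (D + 1)); split; first by apply: Rdiv_lt_0_compat; lra.
move=> s hs hst. apply: He; first by apply: HC.
rewrite seg_dist -/D Rabs_minus_sym.
have hst' : Rabs (s - t) * (D + 1) < e.
  have := Rmult_lt_compat_r (D + 1) _ _ ltac:(lra) hst.
  rewrite /Rdiv Rmult_assoc Rinv_l; lra.
have := Rabs_pos (s - t). nra.
Qed.

Lemma convex_conn n (C : vec n -> Prop) : vconvex C -> vconnected C.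
Proof.
move=> Hcv U V HU HV Hcov [a [Ca Ua]] [b [Cb Vb]].
have HC : forall t, 0 <= t <= 1 -> C (seg a b t) by move=> t ht; apply: Hcv.
have s0 : seg a b 0 = a.
  apply: functional_extensionality => i; rewrite /seg /vadd /vscale; ring.
have s1 : seg a b 1 = b.
  apply: functional_extensionality => i; rewrite /seg /vadd /vscale; ring.
have P0 : U (seg a b 0) by rewrite s0.
have Q1 : V (seg a b 1) by rewrite s1.
have [t [ht [Pt Qt]]] := interval_conn (P := fun t => U (seg a b t)) (Q := fun t => V (seg a b t))
  (fun t ht => Hcov _ (HC t ht)) (open_seg HU HC) (open_seg HV HC)
  P0 Q1.
by exists (seg a b t); split; [apply: HC|].
Qed.

Lemma union_conn n (A B : vec n -> Prop) p :
  vconnected A -> vconnected B -> A p -> B p -> vconnected (fun x => A x \/ B x).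
Proof.
move=> cA cB Ap Bp U V HU HV Hcov [x [ABx Ux]] [y [ABy Vy]].
have oA : forall W, vopen_in (fun x => A x \/ B x) W -> vopen_in A W.
  move=> W HW z Az Wz; have [e [e0 He]] := HW z (or_introl Az) Wz.
  by exists e; split => // w Aw; apply: He; left.
have oB : forall W, vopen_in (fun x => A x \/ B x) W -> vopen_in B W.
  move=> W HW z Bz Wz; have [e [e0 He]] := HW z (or_intror Bz) Wz.
  by exists e; split => // w Bw; apply: He; right.
have gA : (exists z, A z /\ U z) -> (exists z, A z /\ V z) -> exists z, (A z \/ B z) /\ U z /\ V z.
  move=> h1 h2; have [z [Az [Uz Vz]]] := cA U V (oA _ HU) (oA _ HV) (fun z Az => Hcov z (or_introl Az)) h1 h2.
  by exists z; split; [left|].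
have gB : (exists z, B z /\ U z) -> (exists z, B z /\ V z) -> exists z, (A z \/ B z) /\ U z /\ V z.
  move=> h1 h2; have [z [Bz [Uz Vz]]] := cB U V (oB _ HU) (oB _ HV) (fun z Bz => Hcov z (or_intror Bz)) h1 h2.
  by exists z; split; [right|].
case: (Hcov p (or_introl Ap)) => [Up | Vp].
- case: ABy => [Ay | By]; [apply: gA | apply: gB]; by eexists; eauto.
- case: ABx => [Ax | Bx]; [apply: gA | apply: gB]; by eexists; eauto.
Qed.

Lemma comp_meet n (X A B D : vec n -> Prop) :
  vconn_component X A -> vconn_component X B ->
  vconnected D -> (forall x, D x -> X x) ->
  (exists x, D x /\ A x) -> (exists x, D x /\ B x) -> same_set A B.
Proof.
move=> [AX [_ [cA mA]]] [BX [_ [cB mB]]] cD DX [a [Da Aa]] [b [Db Bb]].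
have c1 := union_conn cA cD Aa Da.
have c2 := union_conn c1 cB (or_intror Db) Bb.
have E2X : forall x, ((A x \/ D x) \/ B x) -> X x.
  by move=> x [[h|h]|h]; auto.
move=> x; split => hx.
- apply: (mB _ E2X c2) => //; [by move=> y; right | by left; left].
- apply: (mA _ E2X c2) => //; [by move=> y ?; left; left | by right].
Qed.
Definition HCont n (G : vec n -> vec n) (K : vec n -> Prop) := forall z d, K z -> forall c, 0 < c ->
  exists del, 0 < del /\ forall w, K w -> vdist z w < del -> Rabs (inner (vsub (G w) (G z)) d) < c.

Lemma inner_vsub1 n (u v d : vec n) : inner (vsub u v) d = inner u d - inner v d.
Proof. rewrite (@inner_comb1 n (vsub u v) u v d 1 (-1)); [ring | move=> i; rewrite /vsub; ring]. Qed.

Lemma sol_convex n (K : vec n -> Prop) G : vconvex K -> vmonotone_on K G -> HCont G K ->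
  vconvex (Sol G K).
Proof.
move=> Kcv Gm HG x y t [Kx Sx] [Ky Sy] ht.
set z := vadd (vscale t x) (vscale (1 - t) y).
have Kz : K z by apply: Kcv.
have mono_sol : forall a, K a -> (forall y, K y -> 0 <= inner (G a) (vsub y a)) ->
    forall w, K w -> 0 <= inner (G w) (vsub w a).
  move=> a Ka Sa w Kw. have := Gm a w Ka Kw. rewrite inner_vsub1.
  have := Sa w Kw. lra.
have Minty : forall w, K w -> 0 <= inner (G w) (vsub w z).
  move=> w Kw.
  rewrite (@inner_comb2 n (G w) (vsub w z) (vsub w x) (vsub w y) t (1 - t)); last first.
    move=> i; rewrite /vsub /z /vadd /vscale; ring.
  have := mono_sol x Kx Sx w Kw. have := mono_sol y Ky Sy w Kw. nra.
split => // y' Ky'. apply: Rnot_lt_le => hneg.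
set c := - inner (G z) (vsub y' z).
have c0 : 0 < c by rewrite /c; lra.
have [del [del0 Hdel]] := HG z (vsub y' z) Kz c c0.
set D := sqrt (inner (vsub z y') (vsub z y')).
have D0 : 0 <= D by apply: sqrt_pos.
set s := Rmin (1/2) (del / (2 * (D + 1))).
have q0 : 0 < del / (2 * (D + 1)) by apply: Rdiv_lt_0_compat; lra.
have s0 : 0 < s by apply: Rmin_glb_lt; lra.
have s1 : s <= 1/2 by apply: Rmin_l.
have s2 : s <= del / (2 * (D + 1)) by apply: Rmin_r.
have s3 : s * (2 * (D + 1)) <= del.
  have := Rmult_le_compat_r (2 * (D + 1)) _ _ ltac:(lra) s2.
  rewrite /Rdiv Rmult_assoc Rinv_l; lra.
set w := vadd (vscale s y') (vscale (1 - s) z).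
have Kw : K w by apply: Kcv => //; lra.
have dw : vdist z w < del.
  rewrite (@vdist_scaled n z w (vsub z y') s); last first.
    move=> i; rewrite /vsub /w /vadd /vscale; ring.
  rewrite Rabs_right; last lra. rewrite -/D. nra.
have := Hdel w Kw dw.
rewrite inner_vsub1 => habs.
have hw : 0 <= inner (G w) (vsub y' z).
  have := Minty w Kw.
  rewrite (@inner_comb2 n (G w) (vsub w z) (vsub y' z) (vsub y' z) s 0); last first.
    move=> i; rewrite /vsub /w /vadd /vscale; ring.
  nra.
have := Rle_abs (inner (G w) (vsub y' z) - inner (G z) (vsub y' z)).
rewrite /c in habs. lra.
Qed.
Lemma uniform_delta m (P : 'I_m -> R -> Prop) :
  (forall l d d', 0 < d' <= d -> P l d -> P l d') ->
  (forall l, exists d, 0 < d /\ P l d) -> exists d, 0 < d /\ forall l, P l d.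
Proof.
move=> Hmon Hex.
suff: forall s : seq 'I_m, exists d, 0 < d /\ forall l, l \in s -> P l d.
  move=> /(_ (enum 'I_m)) [d [d0 Hd]]; exists d; split => // l; apply: Hd; by rewrite mem_enum.
elim => [|a s [d [d0 Hd]]]; first by exists 1; split => //; lra.
have [da [da0 Hda]] := Hex a.
exists (Rmin d da); split; first by apply: Rmin_glb_lt.
move=> l; rewrite in_cons => /orP [/eqP -> | ls].
- apply: (Hmon a da) => //; split; [by apply: Rmin_glb_lt | apply: Rmin_r].
- apply: (Hmon l d); last by apply: Hd.
  split; [by apply: Rmin_glb_lt | apply: Rmin_l].
Qed.

Lemma fxi_vsub n m (F : 'I_m -> vec n -> vec n) xi x y d :
  inner (vsub (Fxi F xi y) (Fxi F xi x)) d =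
  \big[Rplus/0]_(l<m) (xi l * inner (vsub (F l y) (F l x)) d).
Proof.
rewrite inner_vsub1 /Fxi (inner_fxi xi (fun l => F l y)) (inner_fxi xi (fun l => F l x)).
rewrite /Rminus -sumN -sumD; apply: eq_bigr => l _; rewrite inner_vsub1; ring.
Qed.

Lemma fxi_mono n m (F : 'I_m -> vec n -> vec n) xi K :
  (forall l, 0 <= xi l) -> (forall l, vmonotone_on K (F l)) -> vmonotone_on K (Fxi F xi).
Proof.
move=> xi0 Hm x y Kx Ky; rewrite fxi_vsub; apply: sum_ge0 => l.
have := Hm l x y Kx Ky; have := xi0 l; nra.
Qed.

Lemma fxi_HC n m (F : 'I_m -> vec n -> vec n) xi K :
  simplex xi -> (forall l, vcontinuous_on K (F l)) -> HCont (Fxi F xi) K.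
Proof.
move=> [xi0 xi1] Hc z d Kz c c0.
set M := \big[Rplus/0]_(i<n) Rabs (d i).
have M0 : 0 <= M by apply: sum_ge0 => i; apply: Rabs_pos.
set e := c / (M + 1).
have e0 : 0 < e by apply: Rdiv_lt_0_compat; lra.
have eM : e * (M + 1) = c by rewrite /e; field; lra.
have [del [del0 Hdel]] := @uniform_delta m
  (fun l del => forall w, K w -> vdist z w < del -> vdist (F l z) (F l w) < e)
  ltac:(move=> l d1 d2 h H w Kw hw; apply: H => //; lra)
  ltac:(move=> l; have [del [del0 H]] := Hc l z Kz e e0; exists del; split => //).
exists del; split => // w Kw hw.
rewrite fxi_vsub.
apply: (Rle_lt_trans _ (\big[Rplus/0]_(l<m) (xi l * (e * M)))).
  apply: Rle_trans; first by apply: sum_abs.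
  apply: sum_le => l; rewrite Rabs_mult Rabs_right; last by have := xi0 l; lra.
  apply: Rmult_le_compat_l => //.
  apply: Rle_trans; first by apply: inner_bound.
  rewrite -/M; apply: Rmult_le_compat_r => //.
  have := Hdel l w Kw hw; rewrite vdist_sym /vdist; lra.
rewrite -big_distrl /= xi1. nra.
Qed.

Lemma fxi_solw n m (F : 'I_m -> vec n -> vec n) xi K x :
  simplex xi -> Sol (Fxi F xi) K x -> Sol_w F K x.
Proof.
move=> [xi0 xi1] [Kx Sx]; split => // y Ky Hall.
have := Sx y Ky.
rewrite /Fxi (inner_fxi xi (fun l => F l x)).
have -> : \big[Rplus/0]_(l<m) (xi l * inner (F l x) (vsub y x)) =
          - \big[Rplus/0]_(l<m) (xi l * inner (F l x) (vsub x y)).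
  rewrite -sumN; apply: eq_bigr => l _.
  rewrite (@inner_comb2 n (F l x) (vsub y x) (vsub x y) (vsub x y) (-1) 0); first ring.
  move=> i; rewrite /vsub; ring.
case: (classic (exists j, 0 < xi j)) => [[j xj] | hno].
- have := @term_le_sum m (fun l => xi l * inner (F l x) (vsub x y)) j.
  have := Hall j. move=> h1 h2.
  have := h2 ltac:(move=> l; have := xi0 l; have := Hall l; nra). nra.
- have : \big[Rplus/0]_(l<m) xi l = 0.
    apply: big1 => l _. have := xi0 l. have : ~ 0 < xi l by move=> h; apply: hno; exists l.
    lra.
  lra.
Qed.

Theorem proposition2 (n m : nat) (K : vec n -> Prop) (F : 'I_m -> vec n -> vec n)
  (hKne : exists x, K x) (hKcl : vclosed K) (hKcv : vconvex K)
  (hFc : forall l, vcontinuous_on K (F l))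
  (hmono : forall l, vmonotone_on K (F l)) :
  (forall A B : vec n -> Prop,
     vconn_component (Sol_w F K) A -> vconn_component (Sol_w F K) B ->
     ~ same_set A B ->
     forall xi, ~ (S_inv F K A xi /\ S_inv F K B xi)) /\
  (forall A B : vec n -> Prop,
     vconn_component (Sol_pr F K) A -> vconn_component (Sol_pr F K) B ->
     ~ same_set A B ->
     forall xi, ~ ((ri_simplex xi /\ exists x, S_map F K xi x /\ A x) /\
                   (ri_simplex xi /\ exists x, S_map F K xi x /\ B x))).
Proof.
have Sconn : forall xi, simplex xi -> vconnected (S_map F K xi).
  move=> xi hxi; apply: convex_conn; apply: sol_convex => //.
  - by apply: fxi_mono => //; case: hxi.
  - by apply: fxi_HC.
split.
- move=> A B cA cB nAB xi [[hxi [a [Sa Aa]]] [_ [b [Sb Bb]]]].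
  apply: nAB; apply: (comp_meet cA cB (Sconn xi hxi)).
  + by move=> x Sx; apply: fxi_solw Sx.
  + by exists a.
  + by exists b.
- move=> A B cA cB nAB xi [[hxi [a [Sa Aa]]] [_ [b [Sb Bb]]]].
  apply: nAB; apply: (comp_meet cA cB (Sconn xi (proj1 hxi))).
  + by move=> x Sx; exists xi.
  + by exists a.
  + by exists b.
Qed.
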